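(* Let $C_0>0$ and $\mathcal{U}_0=e^{C_0}/(1+e^{C_0})^2$. For $m\in\mathcal{M}$, let $$\hat f_m=\arg\min_{t\in \mathcal{S}_m\cap \mathbb{L}_\infty(C_0)}\gamma_n(t),\qquad f_m=\arg\min_{t\in \mathcal{S}_m\cap \mathbb{L}_\infty(C_0)}\gamma(t).$$ Then $$\mathbb{E}_{f_0}\big[\mathcal{K}(\mathbb{P}_{f_0}^{(n)},\mathbb{P}_{\hat f_m}^{(n)})\big]\le \mathcal{K}(\mathbb{P}_{f_0}^{(n)},\mathbb{P}_{f_m}^{(n)})+\frac{D_m}{2n\,\mathcal{U}_0^2}.$$
   Context: Observations $(Y_1,x_1),\dots,(Y_n,x_n)\in\{0,1\}\times\mathcal{X}$ with deterministic design points $x_i$ and independent $Y_i$ satisfying $\mathbb{E}_{f_0}(Y_i)=\pi_{f_0}(x_i)$, where for a function $f:\mathcal{X}\to\mathbb{R}$, $\pi_f(x)=e^{f(x)}/(1+e^{f(x)})$, and $f_0$ is an unknown function. $\mathbb{P}^{(n)}_f$ denotes the law of $(Y_1,\dots,Y_n)$ when $Y_i$ are independent Bernoulli$(\pi_f(x_i))$. The contrast is $\gamma_n(f)=\frac1n\sum_{i=1}^n\{\log(1+e^{f(x_i)})-Y_if(x_i)\}$ and $\gamma(f)=\mathbb{E}_{f_0}[\gamma_n(f)]$. The normalized Kullback–Leibler divergence is $\mathcal{K}(\mathbb{P}_{f_0}^{(n)},\mathbb{P}_{f}^{(n)})=\frac1n\sum_{i=1}^n\big[\pi_{f_0}(x_i)\log\frac{\pi_{f_0}(x_i)}{\pi_f(x_i)}+(1-\pi_{f_0}(x_i))\log\frac{1-\pi_{f_0}(x_i)}{1-\pi_f(x_i)}\big]$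 $(=\gamma(f)-\gamma(f_0))$. A dictionary $\{\phi_1,\dots,\phi_M\}$ of functions $\mathcal{X}\to\mathbb{R}$, orthonormal for the empirical inner product $\langle f,g\rangle_n=\frac1n\sum_{i}f(x_i)g(x_i)$, is fixed; $\mathcal{M}$ is the set of subsets $m\subset\{1,\dots,M\}$, $\mathcal{S}_m=\{\sum_{j\in m}\beta_j\phi_j\}$ and $D_m$ is the dimension of $\mathrm{span}\{\phi_j,j\in m\}$. For $C_0>0$, $\mathbb{L}_\infty(C_0)=\{f:\mathcal{X}\to\mathbb{R}:\max_{1\le i\le n}|f(x_i)|\le C_0\}$. *)

(* Defs.v *)
From HB Require Import structures.
From mathcomp Require Import all_boot all_order all_algebra.
From mathcomp Require Import reals.
From mathcomp Require Import sequences exp.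
Set Implicit Arguments. Unset Strict Implicit. Unset Printing Implicit Defensive.
Import Order.TTheory GRing.Theory Num.Theory.
Local Open Scope ring_scope.

Section Logistic.
Variables (R : realType) (X : Type) (n M : nat) (x : 'I_n -> X).

Definition pif (f : X -> R) (z : X) : R := expR (f z) / (1 + expR (f z)).

Definition obs := {ffun 'I_n -> bool}.

Definition gamma_n (Y : obs) (f : X -> R) : R :=
  n%:R^-1 * \sum_(i < n) (ln (1 + expR (f (x i))) - (Y i)%:R * f (x i)).

Definition probY (f0 : X -> R) (Y : obs) : R :=
  \prod_(i < n) (if Y i then pif f0 (x i) else 1 - pif f0 (x i)).

Definition Ef0 (f0 : X -> R) (g : obs -> R) : R :=
  \sum_(Y : obs) probY f0 Y * g Y.

Definition gamma (f0 : X -> R) (f : X -> R) : R := Ef0 f0 (fun Y => gamma_n Y f).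

Definition KL (f0 f : X -> R) : R :=
  n%:R^-1 * \sum_(i < n)
    (pif f0 (x i) * ln (pif f0 (x i) / pif f (x i))
     + (1 - pif f0 (x i)) * ln ((1 - pif f0 (x i)) / (1 - pif f (x i)))).

Definition inner_n (f g : X -> R) : R := n%:R^-1 * \sum_(i < n) f (x i) * g (x i).

Definition orthonormal_dict (phi : 'I_M -> X -> R) : Prop :=
  forall j k, inner_n (phi j) (phi k) = (j == k)%:R.

Definition in_Sm (phi : 'I_M -> X -> R) (m : {set 'I_M}) (f : X -> R) : Prop :=
  exists beta : 'I_M -> R, f = (fun z => \sum_(j in m) beta j * phi j z).

Definition in_Linf (C0 : R) (f : X -> R) : Prop := forall i : 'I_n, `|f (x i)| <= C0.

(* D_m = dimension of span{phi_j, j in m} (as functions evaluated on the design) *)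
Definition Dm (phi : 'I_M -> X -> R) (m : {set 'I_M}) : nat :=
  \rank (\matrix_(j < M, i < n) (if j \in m then phi j (x i) else 0)).

End Logistic.

(* Main.v *)
Require Import Defs.
From HB Require Import structures.
From mathcomp Require Import all_boot all_order all_algebra.
From mathcomp Require Import reals.
From mathcomp Require Import sequences exp.
From mathcomp Require Import ring lra.
Import Order.TTheory GRing.Theory Num.Theory.
Local Open Scope ring_scope.
Set Implicit Arguments. Unset Strict Implicit.

Lemma pif_gt0 (R : realType) (X : Type) (f : X -> R) z : 0 < pif f z.
Proof. by rewrite /pif divr_gt0 ?expR_gt0 // addr_gt0 ?expR_gt0. Qed.

Lemma pif_lt1 (R : realType) (X : Type) (f : X -> R) z : pif f z < 1.
Proof.
rewrite /pif ltr_pdivrMr ?addr_gt0 ?expR_gt0 // mul1r.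
by rewrite ltrDr.
Qed.

Lemma Ef0_prod (R : realType) (X : Type) (n : nat) (x : 'I_n -> X) (f0 : X -> R)
  (g : 'I_n -> bool -> R) :
  Ef0 x f0 (fun Y => \prod_i g i (Y i)) =
  \prod_i (pif f0 (x i) * g i true + (1 - pif f0 (x i)) * g i false).
Proof.
rewrite /Ef0 /probY.
rewrite (eq_bigr (fun i => \sum_(b : bool) (if b then pif f0 (x i) else 1 - pif f0 (x i)) * g i b)); last first.
  by move=> i _; rewrite big_bool.
rewrite bigA_distr_bigA; apply: eq_bigr => Y _.
by rewrite -big_split.
Qed.

Lemma Ef0_ext (R : realType) (X : Type) (n : nat) (x : 'I_n -> X) (f0 : X -> R) g h :
  (forall Y, g Y = h Y) -> Ef0 x f0 g = Ef0 x f0 h.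
Proof. by move=> e; apply: eq_bigr => Y _; rewrite e. Qed.

Lemma probY_ge0 (R : realType) (X : Type) (n : nat) (x : 'I_n -> X) (f0 : X -> R) Y :
  0 <= probY x f0 Y.
Proof.
rewrite /probY; apply: prodr_ge0 => i _; case: (Y i).
  have := pif_gt0 f0 (x i); exact: ltW.
by rewrite subr_ge0 ltW // pif_lt1.
Qed.

Lemma Ef0_add (R : realType) (X : Type) (n : nat) (x : 'I_n -> X) (f0 : X -> R) g h :
  Ef0 x f0 (fun Y => g Y + h Y) = Ef0 x f0 g + Ef0 x f0 h.
Proof. by rewrite /Ef0 -big_split; apply: eq_bigr => Y _; rewrite mulrDr. Qed.

Lemma Ef0_scale (R : realType) (X : Type) (n : nat) (x : 'I_n -> X) (f0 : X -> R) c g :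
  Ef0 x f0 (fun Y => c * g Y) = c * Ef0 x f0 g.
Proof. by rewrite /Ef0 mulr_sumr; apply: eq_bigr => Y _; rewrite mulrCA. Qed.

Lemma Ef0_sum (R : realType) (X : Type) (n : nat) (x : 'I_n -> X) (f0 : X -> R)
   (I : Type) (r : seq I) (P : pred I) (F : I -> obs n -> R) :
  Ef0 x f0 (fun Y => \sum_(k <- r | P k) F k Y) = \sum_(k <- r | P k) Ef0 x f0 (F k).
Proof.
rewrite /Ef0; under eq_bigr do rewrite mulr_sumr.
by rewrite exchange_big.
Qed.

Lemma Ef0_le (R : realType) (X : Type) (n : nat) (x : 'I_n -> X) (f0 : X -> R) g h :
  (forall Y, g Y <= h Y) -> Ef0 x f0 g <= Ef0 x f0 h.
Proof.
move=> le; apply: ler_sum => Y _; apply: ler_wpM2l; first exact: probY_ge0.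
exact: le.
Qed.

Lemma Ef0_const (R : realType) (X : Type) (n : nat) (x : 'I_n -> X) (f0 : X -> R) c :
  Ef0 x f0 (fun _ => c) = c.
Proof.
have -> : Ef0 x f0 (fun _ => c) = c * Ef0 x f0 (fun Y => \prod_(i < n) (fun _ _ => 1 : R) i (Y i)).
  by rewrite -Ef0_scale; apply: Ef0_ext => Y; rewrite big1 ?mulr1.
by rewrite (Ef0_prod x f0 (fun _ _ => 1)) big1 ?mulr1 // => i _; rewrite !mulr1 addrC subrK.
Qed.

Lemma Ef0_Y (R : realType) (X : Type) (n : nat) (x : 'I_n -> X) (f0 : X -> R) i :
  Ef0 x f0 (fun Y => (Y i)%:R) = pif f0 (x i).
Proof.
pose g l (b : bool) : R := if l == i then (b%:R : R) else 1.
rewrite (@Ef0_ext _ _ _ x f0 _ (fun Y => \prod_(l < n) g l (Y l))); last first.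
  by move=> Y; rewrite /g -big_mkcond /= big_pred1_eq.
rewrite (Ef0_prod x f0 g) /g (bigD1 i) //= eqxx big1 ?mulr1.
  by rewrite mulr0 addr0.
by move=> l /negbTE ->; rewrite !mulr1 addrC subrK.
Qed.

Lemma Ef0_eps2 (R : realType) (X : Type) (n : nat) (x : 'I_n -> X) (f0 : X -> R) i k :
  Ef0 x f0 (fun Y => ((Y i)%:R - pif f0 (x i)) * ((Y k)%:R - pif f0 (x k))) =
  if i == k then pif f0 (x i) * (1 - pif f0 (x i)) else 0.
Proof.
pose e l (b : bool) : R := b%:R - pif f0 (x l).
pose g l (b : bool) : R := (if l == i then e l b else 1) * (if l == k then e l b else 1).
rewrite (@Ef0_ext _ _ _ x f0 _ (fun Y => \prod_(l < n) g l (Y l))); last first.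
  by move=> Y; rewrite /g big_split /= -!big_mkcond /= !big_pred1_eq.
rewrite (Ef0_prod x f0 g) /g (bigD1 i) //= eqxx /e.
case: eqP => [<-|/eqP nik].
  rewrite big1 ?mulr1; first by rewrite /=; ring.
  by move=> l /negbTE ->; rewrite !mulr1 addrC subrK.
rewrite /=.
by rewrite [X in X * _](_ : _ = 0) ?mul0r // mulr1n mulr1 mulr1; ring.
Qed.

Lemma U0_le (R : realType) (C0 c : R) : `|c| <= C0 ->
  expR C0 / (1 + expR C0) ^+ 2 <= expR c / (1 + expR c) ^+ 2.
Proof.
rewrite ler_norml => /andP[hl hr].
have K0 := expR_gt0 C0; have E0 := expR_gt0 c.
have hEK : expR c <= expR C0 by rewrite ler_expR.
have hEK2 : 1 <= expR c * expR C0.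
  rewrite -expRD -expR0 ler_expR; lra.
have p1 : 0 < (1 + expR C0) ^+ 2 by rewrite exprn_gt0 // addr_gt0.
have p2 : 0 < (1 + expR c) ^+ 2 by rewrite exprn_gt0 // addr_gt0.
rewrite ler_pdivrMr // mulrAC ler_pdivlMr //.
nra.
Qed.

Lemma sinh_bound (R : realType) (d : R) : 2 * d ^+ 2 <= (expR d - expR (- d)) ^+ 2.
Proof.
wlog hd : d / 0 <= d.
  move=> H; case: (lerP 0 d) => h; first exact: H.
  have : 0 <= - d by lra.
  move=> /H; rewrite opprK sqrrN.
  by rewrite -[X in _ <= X -> _]sqrrN opprB.
set E := expR d; set F := expR (- d).
have EF : E * F = 1 by rewrite /E /F expRxMexpNx_1.
have F0 : 0 < F by exact: expR_gt0.
have h2 : 1 + d / 2 <= expR (d / 2) by exact: expR_ge1Dx.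
have Eh : E = expR (d / 2) * expR (d / 2) by rewrite -expRD -splitr.
have hs : (1 + d / 2) ^+ 2 <= E.
  rewrite Eh expr2; apply: ler_pM => //; lra.
set s := (1 + d / 2) ^+ 2 in hs.
have sd : 1 + d <= s by rewrite /s; nra.
have E0 : 0 < E by exact: expR_gt0.
have key : 3 / 2 * d <= E - F.
  have h1 : 0 <= (E - s) * (E + s - 3 / 2 * d) by apply: mulr_ge0; lra.
  have h3 : 0 <= s ^+ 2 - 3 / 2 * d * s - 1 by rewrite /s; nra.
  have : 0 <= E * (E - F - 3 / 2 * d) by nra.
  rewrite pmulr_rge0 //; lra.
nra.
Qed.

Lemma lnconv (R : realType) (C0 a b : R) : `|a| <= C0 -> `|b| <= C0 ->
  expR C0 / (1 + expR C0) ^+ 2 * (a - b) ^+ 2 / 8 <=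
  ln (1 + expR a) + ln (1 + expR b) - 2 * ln (1 + expR ((a + b) / 2)).
Proof.
move=> ha hb.
set U := expR C0 / (1 + expR C0) ^+ 2.
have U0 : 0 <= U by rewrite /U divr_ge0 ?expR_ge0 // exprn_ge0 // addr_ge0 ?expR_ge0.
have hUa := U0_le ha; have hUb := U0_le hb.
set u := expR (a / 2); set v := expR (b / 2).
set w := expR ((a + b) / 4); set E := expR ((a - b) / 4); set F := expR (- ((a - b) / 4)).
have u0 : 0 < u by exact: expR_gt0.
have v0 : 0 < v by exact: expR_gt0.
have ea : expR a = u ^+ 2 by rewrite expr2 -expRD -splitr.
have eb : expR b = v ^+ 2 by rewrite expr2 -expRD -splitr.
have eab : expR ((a + b) / 2) = u * v by rewrite -expRD; congr expR; lra.
have uw : u = w * E by rewrite -expRD; congr expR; lra.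
have vw : v = w * F by rewrite -expRD; congr expR; lra.
have EF : E * F = 1 by rewrite /E /F expRxMexpNx_1.
have sh := sinh_bound ((a - b) / 4).
rewrite -/E -/F in sh.
rewrite ea eb eab in hUa hUb *.
set P := (1 + u ^+ 2) * (1 + v ^+ 2).
set Q := (1 + u * v) ^+ 2.
have P0 : 0 < P by rewrite /P mulr_gt0 // addr_gt0 // exprn_gt0.
have Q0 : 0 < Q by rewrite /Q exprn_gt0 // addr_gt0 // mulr_gt0.
have lnPQ : ln (1 + u ^+ 2) + ln (1 + v ^+ 2) - 2 * ln (1 + u * v) = - ln (Q / P).
  have p1 : 0 < 1 + u ^+ 2 by rewrite addr_gt0 // exprn_gt0.
  have p2 : 0 < 1 + v ^+ 2 by rewrite addr_gt0 // exprn_gt0.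
  have p3 : 0 < 1 + u * v by rewrite addr_gt0 // mulr_gt0.
  rewrite ln_div ?posrE // /P /Q lnM ?posrE //.
  rewrite lnXn //; rewrite mulr2n; lra.
rewrite lnPQ.
have lnle : ln (Q / P) <= Q / P - 1.
  have := @le_ln1Dx R (Q / P - 1); rewrite [1 + _]addrC subrK; apply.
  have : 0 < Q / P by rewrite divr_gt0.
  lra.
have e1 : 1 - Q / P = (u - v) ^+ 2 / P.
  rewrite /P /Q; field; rewrite !lt0r_neq0 ?addr_gt0 ?exprn_gt0 //.
have uvP : U <= u * v / P.
  have q0 : 0 <= u * v / P by apply/ltW; rewrite divr_gt0 // mulr_gt0.
  have : U ^+ 2 <= (u * v / P) ^+ 2.
    have -> : (u * v / P) ^+ 2 = u ^+ 2 / (1 + u ^+ 2) ^+ 2 * (v ^+ 2 / (1 + v ^+ 2) ^+ 2).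
      rewrite /P; field; rewrite !lt0r_neq0 ?addr_gt0 ?exprn_gt0 //.
    by rewrite expr2; apply: ler_pM.
  by rewrite ler_sqr ?nnegrE.
have uvw : u * v = w ^+ 2 by rewrite uw vw -[w ^+ 2]mulr1 -EF; ring.
have num : u * v * (a - b) ^+ 2 / 8 <= (u - v) ^+ 2.
  rewrite uvw uw vw.
  have -> : (w * E - w * F) ^+ 2 = w ^+ 2 * (E - F) ^+ 2 by ring.
  have -> : w ^+ 2 * (a - b) ^+ 2 / 8 = w ^+ 2 * (2 * ((a - b) / 4) ^+ 2) by field.
  by apply: ler_wpM2l => //; rewrite exprn_ge0 // expR_ge0.
have k0 : 0 <= (a - b) ^+ 2 / 8 by rewrite divr_ge0 // sqr_ge0.
have h1 : U * ((a - b) ^+ 2 / 8) <= u * v / P * ((a - b) ^+ 2 / 8) by rewrite ler_wpM2r.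
have h2 : u * v / P * ((a - b) ^+ 2 / 8) = (u * v * (a - b) ^+ 2 / 8) / P.
  by field; rewrite lt0r_neq0.
have h3 : (u * v * (a - b) ^+ 2 / 8) / P <= (u - v) ^+ 2 / P.
  by rewrite ler_wpM2r // invr_ge0 ltW.
have : U * (a - b) ^+ 2 / 8 <= (u - v) ^+ 2 / P.
  by rewrite -mulrA; apply: le_trans h1 _; rewrite h2.
lra.
Qed.

Definition Gf (R : realType) (X : Type) (n : nat) (x : 'I_n -> X) (f0 f : X -> R) : R :=
  n%:R^-1 * \sum_(i < n) (ln (1 + expR (f (x i))) - pif f0 (x i) * f (x i)).

Definition nuf (R : realType) (X : Type) (n : nat) (x : 'I_n -> X) (f0 : X -> R)
  (Y : obs n) (f : X -> R) : R :=
  n%:R^-1 * \sum_(i < n) (((Y i)%:R - pif f0 (x i)) * f (x i)).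

Lemma ln_pif (R : realType) (X : Type) (f : X -> R) z :
  ln (pif f z) = f z - ln (1 + expR (f z)).
Proof.
rewrite /pif ln_div ?posrE ?expR_gt0 ?addr_gt0 ?expR_gt0 //.
by rewrite expRK.
Qed.

Lemma ln_1mpif (R : realType) (X : Type) (f : X -> R) z :
  ln (1 - pif f z) = - ln (1 + expR (f z)).
Proof.
have p : 0 < 1 + expR (f z) by rewrite addr_gt0 ?expR_gt0.
have -> : 1 - pif f z = (1 + expR (f z))^-1.
  by rewrite /pif; field; rewrite lt0r_neq0.
by rewrite lnV ?posrE.
Qed.

Lemma KL_G (R : realType) (X : Type) (n : nat) (x : 'I_n -> X) (f0 f : X -> R) :
  KL x f0 f = Gf x f0 f - Gf x f0 f0.
Proof.
rewrite /KL /Gf -mulrBr -sumrB; congr (_ * _); apply: eq_bigr => i _.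
have a1 := pif_gt0 f0 (x i); have a2 := pif_gt0 f (x i).
have b1 : 0 < 1 - pif f0 (x i) by rewrite subr_gt0 pif_lt1.
have b2 : 0 < 1 - pif f (x i) by rewrite subr_gt0 pif_lt1.
rewrite !ln_div ?posrE //. rewrite !expRK !ln_1mpif.
  ring. all: by rewrite ?addr_gt0 ?expR_gt0.
Qed.

Lemma gamma_G (R : realType) (X : Type) (n : nat) (x : 'I_n -> X) (f0 f : X -> R) :
  gamma x f0 f = Gf x f0 f.
Proof.
rewrite /gamma /gamma_n /Gf Ef0_scale Ef0_sum; congr (_ * _); apply: eq_bigr => i _.
rewrite (@Ef0_ext _ _ _ x f0 _ (fun Y => ln (1 + expR (f (x i))) + (- f (x i)) * (Y i)%:R)).
  by rewrite Ef0_add Ef0_const Ef0_scale Ef0_Y; ring.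
by move=> Y; ring.
Qed.

Lemma gamma_n_G (R : realType) (X : Type) (n : nat) (x : 'I_n -> X) (f0 f : X -> R) Y :
  gamma_n x Y f = Gf x f0 f - nuf x f0 Y f.
Proof.
rewrite /gamma_n /Gf /nuf -mulrBr -sumrB; congr (_ * _); apply: eq_bigr => i _.
ring.
Qed.

Lemma card_le_Dm (R : realType) (X : Type) (n M : nat) (x : 'I_n -> X)
  (phi : 'I_M -> X -> R) (m : {set 'I_M}) :
  orthonormal_dict x phi -> (0 < n)%N -> (#|m| <= Dm x phi m)%N.
Proof.
move=> on n0.
rewrite /Dm.
set A := \matrix_(j < M, i < n) (if j \in m then phi j (x i) else 0).
pose e : 'I_#|m| -> 'I_M := enum_val.
pose B := rowsub e A.
have nR : (n%:R : R) != 0 by rewrite pnatr_eq0 -lt0n.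
have BBt : B *m B^T = (n%:R : R)%:M.
  apply/matrixP => k l; rewrite !mxE.
  under eq_bigr do rewrite !mxE !enum_valP.
  have := on (e k) (e l); rewrite /inner_n => h.
  have -> : \sum_(j < n) phi (e k) (x j) * phi (e l) (x j) = n%:R * (e k == e l)%:R.
    by rewrite -h mulrA mulfV // mul1r.
  by rewrite (inj_eq enum_val_inj) mulr_natr.
have r1 : \rank (B *m B^T) = #|m|.
  by rewrite BBt -scalemx1 mxrank_scale_nz // mxrank1.
rewrite -r1; apply: leq_trans (mxrankM_maxl _ _) _.
apply: mxrankS; exact: rowsub_sub.
Qed.

Lemma nuf_lin (R : realType) (X : Type) (n M : nat) (x : 'I_n -> X) (f0 : X -> R)
  (phi : 'I_M -> X -> R) (m : {set 'I_M}) (beta : 'I_M -> R) Y :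
  nuf x f0 Y (fun z => \sum_(j in m) beta j * phi j z) =
  \sum_(j in m) beta j * nuf x f0 Y (phi j).
Proof.
rewrite /nuf; under eq_bigr do rewrite mulr_sumr.
rewrite exchange_big mulr_sumr; apply: eq_bigr => j _.
rewrite [RHS]mulrCA; congr (_ * _); rewrite mulr_sumr; apply: eq_bigr => i _; ring.
Qed.

Lemma norm_comb (R : realType) (X : Type) (n M : nat) (x : 'I_n -> X)
  (phi : 'I_M -> X -> R) (m : {set 'I_M}) (c : 'I_M -> R) :
  orthonormal_dict x phi ->
  n%:R^-1 * \sum_(i < n) (\sum_(j in m) c j * phi j (x i)) ^+ 2 = \sum_(j in m) c j ^+ 2.
Proof.
move=> on.
under eq_bigr do rewrite expr2 big_distrlr /=.
rewrite exchange_big mulr_sumr; apply: eq_bigr => j jm /=.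
rewrite exchange_big mulr_sumr (bigD1 j) //= [X in _ + X]big1 ?addr0.
  have := on j j; rewrite eqxx /= mulr1n /inner_n => h.
  transitivity (c j ^+ 2 * (n%:R^-1 * \sum_(i < n) phi j (x i) * phi j (x i))); last by rewrite h mulr1.
  rewrite [RHS]mulrCA [in RHS]mulr_sumr; congr (_ * _); apply: eq_bigr => i _; ring.
move=> k /andP[km kj].
have := on j k; rewrite eq_sym (negbTE kj) /= mulr0n /inner_n => h.
transitivity (c j * c k * (n%:R^-1 * \sum_(i < n) phi j (x i) * phi k (x i))); last by rewrite h mulr0.
rewrite [RHS]mulrCA [in RHS]mulr_sumr; congr (_ * _); apply: eq_bigr => i _; ring.
Qed.

Lemma Ef0_sq (R : realType) (X : Type) (n : nat) (x : 'I_n -> X) (f0 : X -> R) (a : 'I_n -> R) :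
  Ef0 x f0 (fun Y => (\sum_(i < n) ((Y i)%:R - pif f0 (x i)) * a i) ^+ 2) =
  \sum_(i < n) a i ^+ 2 * (pif f0 (x i) * (1 - pif f0 (x i))).
Proof.
rewrite (@Ef0_ext _ _ _ x f0 _ (fun Y => \sum_(i < n) \sum_(k < n) (a i * a k) *
   (((Y i)%:R - pif f0 (x i)) * ((Y k)%:R - pif f0 (x k))))); last first.
  move=> Y; rewrite expr2 big_distrlr /=; apply: eq_bigr => i _; apply: eq_bigr => k _; ring.
rewrite Ef0_sum; apply: eq_bigr => i _.
rewrite Ef0_sum (bigD1 i) //= big1 ?addr0.
  by rewrite Ef0_scale Ef0_eps2 eqxx expr2.
by move=> k ki; rewrite Ef0_scale Ef0_eps2 eq_sym (negbTE ki) mulr0.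
Qed.

Lemma var_bound (R : realType) (X : Type) (n M : nat) (x : 'I_n -> X) (f0 : X -> R)
  (phi : 'I_M -> X -> R) j :
  orthonormal_dict x phi ->
  Ef0 x f0 (fun Y => nuf x f0 Y (phi j) ^+ 2) <= n%:R^-1 / 4.
Proof.
move=> on.
rewrite (@Ef0_ext _ _ _ x f0 _ (fun Y => n%:R^-1 ^+ 2 *
   (\sum_(i < n) ((Y i)%:R - pif f0 (x i)) * phi j (x i)) ^+ 2)); last first.
  by move=> Y; rewrite /nuf exprMn.
rewrite Ef0_scale Ef0_sq.
have N0 : 0 <= n%:R^-1 :> R by rewrite invr_ge0.
have h1 := on j j; rewrite eqxx /= mulr1n /inner_n in h1.
apply: (@le_trans _ _ (n%:R^-1 ^+ 2 * \sum_(i < n) phi j (x i) ^+ 2 / 4)).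
  rewrite ler_wpM2l ?exprn_ge0 //; apply: ler_sum => i _.
  rewrite ler_wpM2l ?sqr_ge0 //; have := sqr_ge0 (pif f0 (x i) - 1 / 2); nra.
rewrite -mulr_suml.
have -> : \sum_(i < n) phi j (x i) ^+ 2 = \sum_(i < n) phi j (x i) * phi j (x i).
  by apply: eq_bigr => i _; rewrite expr2.
set S := \sum_(i < n) _ in h1 *.
have -> : n%:R^-1 ^+ 2 * (S / 4) = n%:R^-1 / 4 * (n%:R^-1 * S) by ring.
by rewrite h1 mulr1.
Qed.

Lemma perY (R : realType) (X : Type) (n M : nat) (x : 'I_n -> X) (f0 : X -> R)
  (phi : 'I_M -> X -> R) (m : {set 'I_M}) (C0 : R) (bm bh : 'I_M -> R) (fm fh : X -> R) Y :
  orthonormal_dict x phi ->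
  fm = (fun z => \sum_(j in m) bm j * phi j z) ->
  fh = (fun z => \sum_(j in m) bh j * phi j z) ->
  in_Linf x C0 fm -> in_Linf x C0 fh ->
  Gf x f0 fm <= Gf x f0 (fun z => \sum_(j in m) ((bm j + bh j) / 2) * phi j z) ->
  Gf x f0 fh - nuf x f0 Y fh <= Gf x f0 fm - nuf x f0 Y fm ->
  expR C0 / (1 + expR C0) ^+ 2 * (Gf x f0 fh - Gf x f0 fm)
    <= 8 * \sum_(j in m) nuf x f0 Y (phi j) ^+ 2.
Proof.
move=> on em eh Lm Lh Gmid Gn.
set U := expR C0 / (1 + expR C0) ^+ 2.
have U0 : 0 <= U by rewrite /U divr_ge0 ?expR_ge0 // exprn_ge0 // addr_ge0 ?expR_ge0.
set mid := fun z => _ in Gmid.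
have midE : forall z, mid z = (fm z + fh z) / 2.
  move=> z; rewrite /mid em eh -big_split mulr_suml; apply: eq_bigr => j _ /=; ring.
have N0 : 0 <= n%:R^-1 :> R by rewrite invr_ge0.
set c := fun j => bh j - bm j.
set S := \sum_(j in m) c j ^+ 2.
set V := \sum_(j in m) nuf x f0 Y (phi j) ^+ 2.
set T := \sum_(j in m) c j * nuf x f0 Y (phi j).
have strong : U / 8 * S <= Gf x f0 fm + Gf x f0 fh - 2 * Gf x f0 mid.
  have -> : Gf x f0 fm + Gf x f0 fh - 2 * Gf x f0 mid =
    n%:R^-1 * \sum_(i < n) (ln (1 + expR (fm (x i))) + ln (1 + expR (fh (x i)))
       - 2 * ln (1 + expR ((fm (x i) + fh (x i)) / 2))).
    rewrite /Gf.
    set A := \sum_(i < n) _; set B := \sum_(i < n) _; set C := \sum_(i < n) _.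
    transitivity (n%:R^-1 * (A + B - 2 * C)); first by ring.
    congr (_ * _); rewrite /A /B /C mulr_sumr -big_split -sumrB; apply: eq_bigr => i _.
    by rewrite midE /=; field.
  rewrite /S -(@norm_comb _ _ _ _ x phi m c on).
  rewrite mulrCA; apply: ler_wpM2l => //.
  rewrite mulr_sumr; apply: ler_sum => i _.
  have -> : \sum_(j in m) c j * phi j (x i) = fh (x i) - fm (x i).
    rewrite em eh -sumrB; apply: eq_bigr => j _; rewrite /c; ring.
  have := lnconv (Lm i) (Lh i); rewrite -/U.
  have -> : (fm (x i) - fh (x i)) ^+ 2 = (fh (x i) - fm (x i)) ^+ 2 by ring.
  by rewrite mulrAC.
have dT : nuf x f0 Y fh - nuf x f0 Y fm = T.
  rewrite em eh !nuf_lin -sumrB; apply: eq_bigr => j _; rewrite /c; ring.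
have amgm : 16 * (U * T) <= U ^+ 2 * S + 64 * V.
  rewrite /T /S /V !mulr_sumr -big_split; apply: ler_sum => j _ /=.
  have := sqr_ge0 (U * c j - 8 * nuf x f0 Y (phi j)); nra.
set D := Gf x f0 fh - Gf x f0 fm.
have h1 : U / 8 * S <= D by rewrite /D; lra.
have h1' : U * S <= 8 * D by lra.
have h2 : D <= T by rewrite /D; lra.
have S0 : 0 <= S by rewrite /S sumr_ge0 // => j _; exact: sqr_ge0.
have h3 : U * (U * S) <= U * (8 * D) by apply: ler_wpM2l.
have h4 : U * D <= U * T by apply: ler_wpM2l.
nra.
Qed.

Unset Implicit Arguments. Set Strict Implicit.

Theorem proposition3p1 (R : realType) (X : Type) (n M : nat) (x : 'I_n -> X)
    (phi : 'I_M -> X -> R) (f0 : X -> R) (C0 : R) (m : {set 'I_M})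
    (fhat : obs n -> X -> R) (fm : X -> R) :
  orthonormal_dict x phi ->
  0 < C0 ->
  (forall Y : obs n,
     in_Sm phi m (fhat Y) /\ in_Linf x C0 (fhat Y) /\
     (forall t, in_Sm phi m t -> in_Linf x C0 t ->
        gamma_n x Y (fhat Y) <= gamma_n x Y t)) ->
  (in_Sm phi m fm /\ in_Linf x C0 fm /\
     (forall t, in_Sm phi m t -> in_Linf x C0 t ->
        gamma x f0 fm <= gamma x f0 t)) ->
  let U0 := expR C0 / (1 + expR C0) ^+ 2 in
  Ef0 x f0 (fun Y => KL x f0 (fhat Y))
    <= KL x f0 fm + (Dm x phi m)%:R / (2 * n%:R * U0 ^+ 2).
Proof.
move=> on C0pos hhat hfm; case: hfm => [[bm em] [Lm optm]].
cbv zeta; set U0 := expR C0 / (1 + expR C0) ^+ 2.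
have K0 := expR_gt0 C0.
have U0pos : 0 < U0 by rewrite /U0 divr_gt0 // exprn_gt0 // addr_gt0.
have U0le : 4 * U0 <= 1.
  rewrite /U0 mulrA ler_pdivrMr ?exprn_gt0 ?addr_gt0 // mul1r; have := sqr_ge0 (expR C0 - 1); nra.
have hY : forall Y, U0 * (Gf x f0 (fhat Y) - Gf x f0 fm)
    <= 8 * \sum_(j in m) nuf x f0 Y (phi j) ^+ 2.
  move=> Y; case: (hhat Y) => [[bh eh] [Lh opth]].
  apply: (perY on em eh Lm Lh).
    rewrite -!gamma_G; apply: optm.
      by exists (fun j => (bm j + bh j) / 2).
    move=> i /=.
    have -> : \sum_(j in m) (bm j + bh j) / 2 * phi j (x i) = (fm (x i) + fhat Y (x i)) / 2.
      by rewrite em eh /= -big_split mulr_suml; apply: eq_bigr => j _ /=; field.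
    have := Lm i; have := Lh i; rewrite !ler_norml => /andP[a1 a2] /andP[b1 b2].
    apply/andP; split; lra.
  have := opth fm (ex_intro _ bm em) Lm.
  by rewrite (gamma_n_G x f0 (fhat Y) Y) (gamma_n_G x f0 fm Y).
set N := n%:R^-1 : R.
have N0 : 0 <= N by rewrite invr_ge0.
have EV : Ef0 x f0 (fun Y => \sum_(j in m) nuf x f0 Y (phi j) ^+ 2) <= #|m|%:R * (N / 4).
  rewrite Ef0_sum; apply: le_trans (ler_sum _ (fun j _ => var_bound f0 j on)) _.
  by rewrite sumr_const mulr_natl.
have ED : U0 * Ef0 x f0 (fun Y => Gf x f0 (fhat Y) - Gf x f0 fm) <= 2 * (#|m|%:R * N).
  have := Ef0_le x f0 hY; rewrite !Ef0_scale => h; apply: le_trans h _.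
  apply: le_trans (ler_wpM2l _ EV) _ => //; lra.
have AB : #|m|%:R * N <= (Dm x phi m)%:R * N.
  case: (posnP n) => [n0|npos].
    by rewrite /N (_ : n%:R = 0 :> R) ?invr0 ?mulr0 // n0.
  by rewrite ler_wpM2r // ler_nat card_le_Dm.
rewrite (@Ef0_ext _ _ _ x f0 _ (fun Y => (Gf x f0 (fhat Y) - Gf x f0 fm) + (Gf x f0 fm - Gf x f0 f0))); last first.
  by move=> Y; rewrite KL_G; ring.
rewrite Ef0_add Ef0_const KL_G [X in _ <= X]addrC lerD2r.
have -> : (Dm x phi m)%:R / (2 * n%:R * U0 ^+ 2) = (Dm x phi m)%:R * N / (2 * U0 ^+ 2).
  by rewrite /N !invfM; ring.
set E := Ef0 _ _ _ in ED *.
set B := (Dm x phi m)%:R * N in AB *.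
have B0 : 0 <= B by rewrite /B mulr_ge0.
rewrite ler_pdivlMr; last by rewrite mulr_gt0 // exprn_gt0.
nra.
Qed.
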